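(* Let $x_0<\dots<x_n$ and $\hat x_0<\dots<\hat x_n$ be real numbers with $\hat x_0=x_0$, $\hat x_n=x_n$, such that $\max_{k}\sum_{j\neq k}|r_{jk}(\mathbf{x},\hat{\mathbf{x}})|<0.01$ and $\max_k|\hat x_k-x_k|\le0.1\min_{j\neq k}|x_j-x_k|$. Let $f:[x_0,x_n]\to\mathbb{R}$ be Lipschitz with constant $L$, and $y_k=f(\hat x_k)$. Then for every $t\in[x_0,x_n]$, \[ |E(t;\mathbf{y},\mathbf{z})|\le L\,\rho(\hat{\mathbf{x}})\,\|\mathbf{z}\|_1+\Lambda(\hat{\mathbf{x}})\,\|\mathbf{z}\|_\infty\,\|f-P_{\mathbf{y}}\|_\infty . \]
   Context: $r_{jk}(\mathbf{x},\hat{\mathbf{x}}):=\frac{\hat x_k-\hat x_j}{x_k-x_j}-1$; $\lambda_k(\mathbf{x}):=1/\prod_{j\neq k}(x_k-x_j)$; $z_k=(\lambda_k(\mathbf{x})-\lambda_k(\hat{\mathbf{x}}))/\lambda_k(\hat{\mathbf{x}})$. $\ell_k$ is the $k$-th Lagrange polynomial for the nodes $\hat{\mathbf{x}}$; $\rho(\hat{\mathbf{x}}):=\max_{0\le k\le n}\max_{x_0\le t\le x_n}|\ell_k(t)(t-\hat x_k)|$; $\Lambda(\hat{\mathbf{x}}):=\max_{t\in[x_0,x_n]}\sum_k|\ell_k(t)|$. For $\mathbf{v}\in\mathbb{R}^{n+1}$, $P_{\mathbf{v}}$ is the polynomial of degree $\le n$ with $P_{\mathbf{v}}(\hat x_k)=v_k$;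 $E(t;\mathbf{y},\mathbf{z}):=P_{\mathbf{y}\mathbf{z}}(t)-P_{\mathbf{y}}(t)P_{\mathbf{z}}(t)$ with $(\mathbf{yz})_k=y_kz_k$. $\|\cdot\|_\infty$ for functions is the sup norm on $[x_0,x_n]$. *)

(* Defs.v *)
From HB Require Import structures.
From mathcomp Require Import all_boot all_order all_algebra.
From mathcomp Require Import boolp classical_sets reals.
Set Implicit Arguments. Unset Strict Implicit. Unset Printing Implicit Defensive.
Import Order.TTheory GRing.Theory Num.Theory.
Local Open Scope ring_scope.
Local Open Scope classical_set_scope.

Section Defs.
Variables (R : realType) (n : nat).
Implicit Types (x xh v : 'I_n.+1 -> R).

Definition rjk x xh (j k : 'I_n.+1) : R := (xh k - xh j) / (x k - x j) - 1.

Definition lam x (k : 'I_n.+1) : R := 1 / \prod_(j < n.+1 | j != k) (x k - x j).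

Definition zvec x xh (k : 'I_n.+1) : R := (lam x k - lam xh k) / lam xh k.

Definition ell xh (k : 'I_n.+1) (t : R) : R :=
  \prod_(j < n.+1 | j != k) ((t - xh j) / (xh k - xh j)).

Definition Pv xh v (t : R) : R := \sum_(k < n.+1) v k * ell xh k t.

Definition Eerr xh (y z : 'I_n.+1 -> R) (t : R) : R :=
  Pv xh (fun k => y k * z k) t - Pv xh y t * Pv xh z t.

Definition Icc (a b : R) : set R := [set t | a <= t <= b].

Definition rho x xh : R :=
  sup [set u | exists k : 'I_n.+1, exists2 t, Icc (x ord0) (x ord_max) t &
                 u = `|ell xh k t * (t - xh k)|].

Definition Lebesgue x xh : R :=
  sup [set u | exists2 t, Icc (x ord0) (x ord_max) t &
                 u = \sum_(k < n.+1) `|ell xh k t|].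

Definition supnorm x (g : R -> R) : R :=
  sup [set u | exists2 t, Icc (x ord0) (x ord_max) t & u = `|g t|].

Definition norm1 (v : 'I_n.+1 -> R) : R := \sum_(k < n.+1) `|v k|.
Definition norminf (v : 'I_n.+1 -> R) : R := \big[Num.max/0]_(k < n.+1) `|v k|.

End Defs.

(* Main.v *)
Require Import Defs.
From HB Require Import structures.
From mathcomp Require Import all_boot all_order all_algebra.
From mathcomp Require Import boolp classical_sets reals.
From mathcomp Require Import ring lra.
Import Order.TTheory GRing.Theory Num.Theory.
Local Open Scope ring_scope.

Section Helpers.
Variables (R : realType) (n : nat) (x xh : 'I_n.+1 -> R).
Hypothesis hxh : forall i j : 'I_n.+1, (i < j)%N -> xh i < xh j.
Hypothesis h0 : xh ord0 = x ord0.
Hypothesis hn : xh ord_max = x ord_max.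

Lemma xh_in k : Icc (x ord0) (x ord_max) (xh k).
Proof.
rewrite /Icc /= -h0 -hn; apply/andP; split.
  have [/eqP e|ne] := boolP (k == ord0); first by rewrite e.
  apply/ltW/hxh; rewrite lt0n; apply: contra ne => /eqP e; apply/eqP/val_inj.
  exact: e.
have [/eqP e|ne] := boolP (k == ord_max); first by rewrite e.
apply/ltW/hxh => /=; rewrite ltn_neqAle -ltnS ltn_ord andbT.
apply: contra ne => /eqP e; apply/eqP/val_inj; exact: e.
Qed.

Lemma ab : x ord0 <= x ord_max.
Proof. by have /andP[h1 h2] := xh_in ord0; apply: le_trans h2. Qed.

Lemma Icc_dist s t : Icc (x ord0) (x ord_max) s -> Icc (x ord0) (x ord_max) t ->
  `|s - t| <= x ord_max - x ord0.
Proof. rewrite /Icc /= => /andP[h1 h2] /andP[h3 h4]; rewrite ler_norml; lra. Qed.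

Definition Cb k := \prod_(j < n.+1 | j != k) ((x ord_max - x ord0) / `|xh k - xh j|).

Lemma Cb_ge0 k : 0 <= Cb k.
Proof.
apply: prodr_ge0 => j _; apply: divr_ge0 => //; have := ab; lra.
Qed.

Lemma ell_bound k t : Icc (x ord0) (x ord_max) t -> `|ell xh k t| <= Cb k.
Proof.
move=> ht; rewrite /ell normr_prod; apply: ler_prod => j jk.
rewrite normr_ge0 /= normrM normfV; apply: ler_wpM2r; first by rewrite invr_ge0.
exact: Icc_dist (xh_in j).
Qed.

Lemma single_le_sum (F : 'I_n.+1 -> R) k : (forall i, 0 <= F i) ->
  F k <= \sum_(i < n.+1) F i.
Proof.
move=> hF; rewrite (bigD1 k) //= lerDl; exact: sumr_ge0.
Qed.

End Helpers.
Arguments xh_in {R n x xh}.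
Arguments ab {R n x xh}.
Arguments Icc_dist {R n} x s t.
Arguments Cb {R n} x xh k.
Arguments Cb_ge0 {R n x xh}.
Arguments ell_bound {R n x xh}.
Arguments single_le_sum {R n} F k.

Theorem lemma5 (R : realType) (n : nat) (x xh : 'I_n.+1 -> R)
  (f : R -> R) (L : R)
  (hx : forall i j : 'I_n.+1, (i < j)%N -> x i < x j)
  (hxh : forall i j : 'I_n.+1, (i < j)%N -> xh i < xh j)
  (h0 : xh ord0 = x ord0) (hn : xh ord_max = x ord_max)
  (hr : forall k : 'I_n.+1,
          \sum_(j < n.+1 | j != k) `|rjk x xh j k| < 1 / 100)
  (hpert : forall k i j : 'I_n.+1, i != j ->
          `|xh k - x k| <= 1 / 10 * `|x i - x j|)
  (hlip : forall s t, Icc (x ord0) (x ord_max) s -> Icc (x ord0) (x ord_max) t ->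
          `|f s - f t| <= L * `|s - t|) :
  let y := fun k : 'I_n.+1 => f (xh k) in
  let z := zvec x xh in
  forall t, Icc (x ord0) (x ord_max) t ->
    `|Eerr xh y z t| <=
      L * rho x xh * norm1 z + Lebesgue x xh * norminf z * supnorm x (fun s => f s - Pv xh y s).
Proof.
move=> y z t ht.
set a := x ord0; set b := x ord_max.
have hba : 0 <= b - a by have := ab hxh h0 hn; rewrite /a /b; lra.
have hxin := xh_in hxh h0 hn.
have hdist := Icc_dist x.
set S := \sum_(k < n.+1) z k * ell xh k t.
set P := Pv xh y t.
have key : Eerr xh y z t =
  \sum_(k < n.+1) z k * ell xh k t * (y k - f t) + (f t - P) * S.
  have -> : \sum_(k < n.+1) z k * ell xh k t * (y k - f t) =
     \sum_(k < n.+1) (y k * z k) * ell xh k t - f t * S.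
    by rewrite /S mulr_sumr -sumrB; apply: eq_bigr => k _; ring.
  rewrite /Eerr /P -/(Pv xh (fun k => y k * z k) t).
  have -> : Pv xh z t = S by [].
  ring.
have rho_ub : has_ubound [set u | exists k : 'I_n.+1, exists2 t, Icc (x ord0) (x ord_max) t &
                 u = `|ell xh k t * (t - xh k)|]%classic.
  exists (\sum_(k < n.+1) Cb x xh k * (b - a)) => u [k [s hs ->]].
  apply: le_trans (single_le_sum _ k _); last first.
    by move=> i; apply: mulr_ge0 => //; apply: (Cb_ge0 hxh h0 hn).
  rewrite normrM; apply: ler_pM => //; first exact: (ell_bound hxh h0 hn).
  exact: hdist.
have Lam_ub : has_ubound [set u | exists2 t, Icc (x ord0) (x ord_max) t &
                 u = \sum_(k < n.+1) `|ell xh k t|]%classic.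
  exists (\sum_(k < n.+1) Cb x xh k) => u [s hs ->].
  by apply: ler_sum => k _; apply: (ell_bound hxh h0 hn).
have sup_ub : has_ubound [set u | exists2 t, Icc (x ord0) (x ord_max) t &
                 u = `|f t - Pv xh y t|]%classic.
  exists (`|L| * (b - a) + `|f a| + \sum_(k < n.+1) `|y k| * Cb x xh k).
  move=> u [s hs ->].
  have ha : Icc (x ord0) (x ord_max) a by rewrite /Icc /= lexx /= -/a -/b; lra.
  apply: le_trans (ler_normB _ _) _; apply: lerD.
    have -> : f s = (f s - f a) + f a by ring.
    apply: le_trans (ler_normD _ _) _; apply: lerD => //.
    apply: le_trans (hlip _ _ hs ha) _.
    apply: le_trans (ler_norm _) _; rewrite normrM normr_id.
    by apply: ler_wpM2l => //; apply: hdist.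
  apply: le_trans (ler_norm_sum _ _ _) _; apply: ler_sum => k _.
  by rewrite normrM; apply: ler_wpM2l => //; apply: (ell_bound hxh h0 hn).
have ninf_ge k : `|z k| <= norminf z by apply: (le_bigmax (0:R) (fun k => `|z k|) k).
have ninf0 : 0 <= norminf z by apply: le_trans (ninf_ge ord0).
rewrite key; apply: le_trans (ler_normD _ _) _; apply: lerD.
- have [L0|L0] := leP 0 L.
  + apply: le_trans (ler_norm_sum _ _ _) _.
    rewrite /norm1 mulr_sumr; apply: ler_sum => k _.
    rewrite normrM (normrM (z k)) -mulrA [X in _ <= X]mulrC; apply: ler_wpM2l => //.
    have h1 : `|ell xh k t| * `|y k - f t| <= `|ell xh k t| * (L * `|xh k - t|).
      by apply: ler_wpM2l => //; apply: hlip.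
    apply: le_trans h1 _.
    rewrite mulrCA; apply: ler_wpM2l => //.
    apply: (ub_le_sup rho_ub); exists k; exists t => //.
    by rewrite normrM distrC.
  + have coll : forall s u, Icc (x ord0) (x ord_max) s -> Icc (x ord0) (x ord_max) u -> s = u.
      move=> s u hs hu; apply/eqP; rewrite -subr_eq0 -normr_eq0; apply/negPn/negP => hne.
      have hp : 0 < `|s - u| by rewrite lt0r hne normr_ge0.
      have := hlip s u hs hu; have := normr_ge0 (f s - f u); nra.
    have -> : rho x xh = 0.
      rewrite /rho.
      have -> : [set u | exists k : 'I_n.+1, exists2 t, Icc (x ord0) (x ord_max) t &
                 u = `|ell xh k t * (t - xh k)|]%classic = [set 0]%classic.
        apply/seteqP; split => u /=.
          by move=> [k [s hs ->]]; rewrite (coll s (xh k)) // subrr mulr0 normr0.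
        by move=> ->; exists ord0; exists t => //; rewrite (coll t (xh ord0)) // subrr mulr0 normr0.
      exact: sup1.
    rewrite mulr0 mul0r big1 ?normr0 // => k _.
    by rewrite /y (coll (xh k) t) // subrr mulr0.
- rewrite normrM [_ * supnorm _ _]mulrC; apply: ler_pM => //.
    by apply: ub_le_sup => //; exists t.
  apply: le_trans (ler_norm_sum _ _ _) _.
  have h2 : \sum_(k < n.+1) `|z k * ell xh k t| <= \sum_(k < n.+1) norminf z * `|ell xh k t|.
    by apply: ler_sum => k _; rewrite normrM; apply: ler_wpM2r.
  apply: le_trans h2 _.
  rewrite -mulr_sumr mulrC; apply: ler_wpM2r => //.
  by apply: ub_le_sup => //; exists t.
Qed.
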